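(* A graph $G$ on $n$ vertices is an outerplanar triangulation of pathwidth at most $2$ if and only if $G\in PW_2(n)$.
   Context: An outerplanar triangulation is a planar graph that can be drawn in the plane so that the outer face is incident with all vertices and every other face is incident with exactly three vertices. A path decomposition of $G$ is a sequence $(G_i)_{i=1}^m$ of subgraphs of $G$ such that every edge of $G$ lies in some $G_i$ and, for every vertex $v$, the indices $i$ with $v\in G_i$ form a contiguous interval; the pathwidth of $G$ is the least $k$ such that $G$ has a path decomposition with every $G_i$ having at most $k+1$ vertices. $PW_2(n)$ is the class of outerplanar triangulations $G$ on $n$ vertices whose vertex set can be partitioned into two disjoint sets $V_u\cup V_v=V(G)$ such that the induced subgraphs $G[V_u]$ and $G[V_v]$ are paths. *)

(* Defs.v *)
From mathcomp Require Import all_boot.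
Set Implicit Arguments. Unset Strict Implicit. Unset Printing Implicit Defensive.

Definition btw (i j k : nat) : bool := ((i < j) && (j < k)) || ((k < j) && (j < i)).

(* With vertices placed on a circle in the cyclic order given by the positions
   p, the chords xy and uv cross (they have four distinct endpoints that
   alternate around the circle). *)
Definition cross (T : finType) (p : T -> 'I_#|T|) (x y u v : T) : bool :=
  [&& x != u, x != v, y != u, y != v &
      btw (p x) (p u) (p y) != btw (p x) (p v) (p y)].

(* Outerplanar triangulation: G has a drawing with all vertices on the outer
   face, i.e. (combinatorially) a placement of the vertices in convex position
   (cyclic order p) with no two edges crossing, and every inner face is a
   triangle, i.e. the set of chords is maximal non-crossing: every non-edge
   would cross some edge. *)
Definition outerplanar_triangulation (T : finType) (e : rel T) : Prop :=
  exists p : T -> 'I_#|T|,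
    injective p /\
    (forall x y u v, e x y -> e u v -> ~~ cross p x y u v) /\
    (forall x y, x != y -> ~~ e x y -> exists u v, e u v /\ cross p x y u v).

(* A path decomposition (given by the vertex sets of the subgraphs G_i):
   every edge lies in some bag, and the bags containing any vertex are
   contiguous. *)
Definition path_decomposition (T : finType) (e : rel T) (B : seq {set T}) : Prop :=
  (forall x y, e x y -> exists2 b, b \in B & (x \in b) && (y \in b)) /\
  (forall v i j k, i <= j -> j <= k -> k < size B ->
     v \in nth set0 B i -> v \in nth set0 B k -> v \in nth set0 B j).

Definition pathwidth_le (T : finType) (e : rel T) (k : nat) : Prop :=
  exists B : seq {set T}, path_decomposition e B /\ forall b, b \in B -> #|b| <= k.+1.

Definition induced_path (T : finType) (e : rel T) (S : {set T}) : Prop :=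
  exists s : seq T, [/\ s != [::], uniq s, S = [set x in s] &
    forall (x0 : T) i j, i < size s -> j < size s ->
      e (nth x0 s i) (nth x0 s j) = (i.+1 == j) || (j.+1 == i)].

Definition PW2 (n : nat) (T : finType) (e : rel T) : Prop :=
  #|T| = n /\ outerplanar_triangulation e /\
  exists Vu Vv : {set T}, [/\ [disjoint Vu & Vv], Vu :|: Vv = [set: T],
     induced_path e Vu & induced_path e Vv].

(* Main.v *)
Require Import Defs.
From mathcomp Require Import all_boot zify.
Set Implicit Arguments. Unset Strict Implicit. Unset Printing Implicit Defensive.
Set Default Proof Using "All".



Definition valid (T : finType) (e : rel T) (p : T -> 'I_#|T|) :=
  injective p /\ (forall x y u v, e x y -> e u v -> ~~ cross p x y u v) /\
  (forall x y, x != y -> ~~ e x y -> exists u v, e u v /\ cross p x y u v).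

Section A.
Variables (T : finType) (e : rel T).
Hypotheses (esym : symmetric e) (eirr : irreflexive e).
Hypothesis n3 : 3 <= #|T|.
Variable p : T -> 'I_#|T|.
Hypothesis V : valid e p.
Let pinj : injective p := proj1 V.
Let NC := proj1 (proj2 V).
Let MAX := proj2 (proj2 V).

Local Notation n := #|T|.
Local Notation P x := (nat_of_ord (p x)).

Lemma Pinj x y : P x = P y -> x = y.
Proof. by move=> h; apply: pinj; apply: ord_inj. Qed.

Lemma neqP x y : (x != y) = (P x != P y).
Proof.
apply/idP/idP; first by apply: contra => /eqP h; apply/eqP; apply: Pinj.
by apply: contra => /eqP ->.
Qed.

Lemma crossE x y u v : cross p x y u v = [&& P x != P u, P x != P v, P y != P u, P y != P v & btw (P x) (P u) (P y) != btw (P x) (P v) (P y)].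
Proof. by rewrite /cross !neqP. Qed.

Lemma NCn x y u v : e x y -> e u v -> P x != P u -> P x != P v -> P y != P u -> P y != P v -> btw (P x) (P u) (P y) = btw (P x) (P v) (P y).
Proof. move=> h1 h2 a b c d; move: (NC h1 h2); rewrite crossE a b c d /=; by move/negPn/eqP. Qed.

Lemma surj j : j < n -> exists x, P x = j.
Proof.
move=> hj; have /codomP [x hx] := inj_card_onto pinj (eq_leq (card_ord n)) (Ordinal hj).
by exists x; rewrite -hx.
Qed.

Lemma Plt x : P x < n. Proof. exact: ltn_ord. Qed.

Lemma hull x y : (P y == (P x).+1) || ((P x == 0) && (P y == n.-1)) -> e x y.
Proof.
move=> h; apply/negPn/negP => ne.
have xy : x != y by rewrite neqP; lia.
have [u [v [euv]]] := MAX xy ne; rewrite crossE => cr.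
have := Plt u; have := Plt v; have := Plt y; have := Plt x. rewrite /btw in cr. lia.
Qed.

Lemma earIn a b : e a b -> (P a).+1 < P b -> exists w, [/\ P a < P w < P b, e a w & e w b].
Proof.
move=> eab gap.
have [w0 hw0] := surj (ltn_trans gap (Plt b)).
have c0 : (P a < P w0 < P b) && e a w0 by rewrite hw0 leqnn gap hull // hw0 eqxx.
case: (@arg_maxnP _ w0 (fun w => (P a < P w < P b) && e a w) (fun w => P w) c0) => w /andP [rng eaw] maxw.
exists w; split=> //.
apply/negPn/negP => new.
have wb : w != b by rewrite neqP; lia.
have key : forall c d, e c d -> P w < P c < P b -> ~~(P w < P d < P b) -> P d != P w -> P d != P b -> False.
  move=> c d ecd hc hd dw db.
  have ltd := Plt d.
  case: (ltngtP (P d) (P a)) => hda.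
  - have := NCn eab ecd; rewrite /btw; lia.
  - case: (ltnP (P b) (P d)) => hbd.
      have := NCn eab ecd; rewrite /btw; lia.
    have := NCn eaw ecd; rewrite /btw; lia.
  - have := maxw c; rewrite -(Pinj hda) (esym d c) ecd andbT => H.
    have : P d < P c < P b by lia.
    move/H; lia.
have [c [d [ecd]]] := MAX wb new.
rewrite crossE => cr.
case/and5P: cr => c1 c2 c3 c4 c5.
case: (boolP (P w < P c < P b)) => hc.
  apply: (key c d ecd hc); first by move: c5; rewrite /btw; lia.
  - by rewrite eq_sym.
  - by rewrite eq_sym.
apply: (key d c); first by rewrite esym.
- move: c5 hc; rewrite /btw; lia.
- done.
- by rewrite eq_sym.
- by rewrite eq_sym.
Qed.
End A.


Definition rotf (n i : nat) := if i.+1 == n then 0 else i.+1.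

Lemma rotf_lt n i : i < n -> rotf n i < n.
Proof. rewrite /rotf; case: eqP; lia. Qed.

Lemma rotf_inj n i j : i < n -> j < n -> rotf n i = rotf n j -> i = j.
Proof. rewrite /rotf; case: (i.+1 =P n) => ?; case: (j.+1 =P n) => ?; lia. Qed.

Lemma rot1 (n a c b d : nat) : a < n -> b < n -> c < n -> d < n ->
  a != b -> a != c -> a != d -> b != c -> b != d -> c != d ->
  (btw (rotf n a) (rotf n c) (rotf n b) != btw (rotf n a) (rotf n d) (rotf n b)) = (btw a c b != btw a d b).
Proof.
move=> ha hb hc hd ab ac ad bc bd cd.
rewrite /btw /rotf; case: (a.+1 =P n) => ?; case: (b.+1 =P n) => ?; case: (c.+1 =P n) => ?; case: (d.+1 =P n) => ?; lia.
Qed.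

Lemma rotf_mod n k : 0 < n -> rotf n (k %% n) = k.+1 %% n.
Proof.
move=> n0; have lt := ltn_pmod k n0; rewrite /rotf.
have -> : k.+1 %% n = ((k %% n).+1) %% n by rewrite -[k.+1]addn1 -[(k %% n).+1]addn1 modnDml.
case: eqP => h; first by rewrite h modnn.
rewrite [RHS]modn_small //; move: lt h; generalize (k %% n) => m; lia.
Qed.

Lemma modE n r x : x < n -> r <= n -> (x + r) %% n = if x + r < n then x + r else x + r - n.
Proof.
move=> hx hr; case: ifP => h; first by rewrite modn_small.
have h' : n <= x + r by rewrite leqNgt h.
rewrite -{1}(subnK h') modnDr modn_small //; lia.
Qed.

Definition rotp (T : finType) (p : T -> 'I_#|T|) : T -> 'I_#|T| :=
  fun x => Ordinal (rotf_lt (ltn_ord (p x))).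

Lemma valid_rot (T : finType) (e : rel T) (p : T -> 'I_#|T|) : valid e p -> valid e (rotp p).
Proof.
case=> pinj [NC MAX].
have hP : forall a b, (a != b) = (nat_of_ord (p a) != nat_of_ord (p b)).
  by move=> a b; rewrite -(inj_eq pinj).
have cr : forall x y u v, cross (rotp p) x y u v = cross p x y u v.
  move=> x y u v; rewrite /cross /=.
  case: (boolP (x != u)) => //= h1; case: (boolP (x != v)) => //= h2.
  case: (boolP (y != u)) => //= h3; case: (boolP (y != v)) => //= h4.
  case: (boolP (x != y)) => h5; last first.
    move: h5; rewrite negbK => /eqP ->; by rewrite /btw; lia.
  case: (boolP (u != v)) => h6; last first.
    by move: h6; rewrite negbK => /eqP ->; rewrite !eqxx.
  apply: rot1; rewrite ?ltn_ord // -?hP //; by rewrite eq_sym.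
split.
  move=> x y h; apply: pinj; apply: ord_inj; apply: (@rotf_inj #|T|); [exact: ltn_ord|exact: ltn_ord|exact: (congr1 val h)].
split.
  by move=> x y u v h1 h2; rewrite cr; apply: NC.
move=> x y h1 h2; have [u [v [h3 h4]]] := MAX x y h1 h2.
by exists u, v; rewrite cr.
Qed.

Lemma iter_rot (T : finType) (p : T -> 'I_#|T|) r x :
  0 < #|T| -> nat_of_ord (iter r (@rotp T) p x) = (nat_of_ord (p x) + r) %% #|T|.
Proof.
move=> n0; elim: r => [|r IH] /=.
  by rewrite addn0 modn_small.
by rewrite IH rotf_mod // addnS.
Qed.

Lemma valid_iter (T : finType) (e : rel T) (p : T -> 'I_#|T|) r : valid e p -> valid e (iter r (@rotp T) p).
Proof. by move=> V; elim: r => //= r IH; apply: valid_rot. Qed.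

Section B.
Variables (T : finType) (e : rel T).
Hypotheses (esym : symmetric e) (eirr : irreflexive e).
Hypothesis n3 : 3 <= #|T|.
Local Notation n := #|T|.

Lemma earOut (p : T -> 'I_#|T|) (V : valid e p) a b z : e a b -> p a < p b ->
  (p z < p a) || (p b < p z) ->
  exists w, [/\ (p w < p a) || (p b < p w), e a w & e w b].
Proof.
move=> eab ab hz.
set r := n - p b.
have n0 : 0 < n by lia.
have V' := valid_iter r V.
move: V'; set p' := iter r _ p => V'.
have hP : forall x, nat_of_ord (p' x) = (nat_of_ord (p x) + r) %% n.
  by move=> x; exact: iter_rot.
have ltx := fun x => ltn_ord (p x).
have hr : r <= n by lia.
have := hP a; have := hP b; have := hP z.
rewrite !modE // => hz' hb' ha'.
have eba : e b a by rewrite esym.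
have gap : (nat_of_ord (p' b)).+1 < p' a.
  rewrite hb' ha'; move: (ltx a) (ltx b) (ltx z) hz; case: ifP; case: ifP; lia.
have [w [hw ebw ewa]] := earIn esym eirr n3 V' eba gap.
exists w; split; rewrite 1?esym //.
move: hw; rewrite !hP !modE //; move: (ltx a) (ltx b) (ltx w) (ltx z) hz.
case: ifP; case: ifP; case: ifP; lia.
Qed.
End B.


Section C.
Variables (T : finType) (e : rel T).
Hypotheses (esym : symmetric e) (eirr : irreflexive e).
Hypothesis n3 : 3 <= #|T|.
Variable p : T -> 'I_#|T|.
Hypothesis V : valid e p.
Let pinj : injective p := proj1 V.
Let NC := proj1 (proj2 V).
Local Notation n := #|T|.
Local Notation P x := (nat_of_ord (p x)).
Let crossE' := crossE esym eirr n3 V.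
Let neqP' := neqP esym eirr n3 V.
Let surj' := surj esym eirr n3 V.
Let Pinj' := Pinj esym eirr n3 V.
Let hull' := hull esym eirr n3 V.
Let NCn' := NCn esym eirr n3 V.
Let earIn' := earIn esym eirr n3 V.
Let earOut' := earOut esym eirr n3 V.

Lemma n0 : 0 < n. Proof. exact: leq_trans n3. Qed.
Lemma nm1 : n.-1 < n. Proof. by rewrite prednK ?n0. Qed.

Lemma Lcross (s : seq T) x0 a b i j : e a b ->
  (forall t, t.+1 < size s -> e (nth x0 s t) (nth x0 s t.+1)) ->
  a \notin s -> b \notin s -> i < size s -> j < size s ->
  btw (P a) (P (nth x0 s i)) (P b) != btw (P a) (P (nth x0 s j)) (P b) -> False.
Proof.
move=> eab hs ha hb.
set side := fun t => btw (P a) (P (nth x0 s t)) (P b).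
have step : forall t, t.+1 < size s -> side t != side t.+1 -> False.
  move=> t ht hd.
  have := NC eab (hs t ht); rewrite crossE'.
  have ut : nth x0 s t \in s by rewrite mem_nth // ltnW.
  have vt : nth x0 s t.+1 \in s by apply: mem_nth.
  have d1 : a != nth x0 s t by apply: contraNneq ha => ->.
  have d2 : a != nth x0 s t.+1 by apply: contraNneq ha => ->.
  have d3 : b != nth x0 s t by apply: contraNneq hb => ->.
  have d4 : b != nth x0 s t.+1 by apply: contraNneq hb => ->.
  move: d1 d2 d3 d4; rewrite !neqP' => -> -> -> ->.
  by rewrite /= hd.
have gen : forall i k, i + k < size s -> side i != side (i + k) -> False.
  move=> i' k; elim: k => [|k IH] hk hd; first by rewrite addn0 eqxx in hd.
  case: (boolP (side i' != side (i' + k))) => h; first by apply: IH => //; lia.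
  move/negPn/eqP: h => h; apply: (step (i' + k)); first by rewrite -addnS.
  by rewrite -h -addnS.
move=> hi hj hd.
case: (leqP i j) => hij.
  apply: (gen i (j - i)); first by rewrite subnKC.
  by rewrite subnKC.
apply: (gen j (i - j)); first by rewrite subnKC //; lia.
by rewrite subnKC 1?eq_sym //; lia.
Qed.

Lemma tri S x y z : induced_path e S -> x \in S -> y \in S -> z \in S ->
  e x y -> e y z -> e x z -> False.
Proof.
case=> s [_ _ -> hs]; rewrite !inE => hx hy hz exy eyz exz.
have h1 := hs x (index x s) (index y s); rewrite !nth_index ?index_mem // in h1.
have h2 := hs x (index y s) (index z s); rewrite !nth_index ?index_mem // in h2.
have h3 := hs x (index x s) (index z s); rewrite !nth_index ?index_mem // in h3.
move: (h1 hx hy) (h2 hy hz) (h3 hx hz); rewrite exy eyz exz.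
move: (index x s) (index y s) (index z s) => i j k; clear; lia.
Qed.

Lemma sideG (X Y : {set T}) c1 c2 c3 x : [disjoint X & Y] -> X :|: Y = setT ->
  induced_path e X -> induced_path e Y -> c1 \in X -> c2 \in X -> c3 \in Y ->
  e c1 c2 -> e c1 x -> e x c2 ->
  btw (P c1) (P c3) (P c2) != btw (P c1) (P x) (P c2) -> False.
Proof.
move=> dXY hU iX iY h1 h2 h3 e12 e1x ex2 hd.
have xY : x \in Y.
  case: (boolP (x \in X)) => hX; first by exfalso; apply: (tri iX h1 hX h2 e1x ex2 e12).
  have : x \in X :|: Y by rewrite hU inE.
  by rewrite inE (negbTE hX).
case: iY => s [_ _ hYs hs].
have c1s : c1 \notin s by rewrite -(in_set (fun x => x \in s)) -hYs (disjointFr dXY h1).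
have c2s : c2 \notin s by rewrite -(in_set (fun x => x \in s)) -hYs (disjointFr dXY h2).
move: h3 xY; rewrite hYs !inE => h3 xY.
apply: (@Lcross s c1 c1 c2 (index c3 s) (index x s)) => //.
- by move=> t ht; rewrite hs ?eqxx // ltnW.
- by rewrite index_mem.
- by rewrite index_mem.
- by rewrite !nth_index.
Qed.

Lemma pw2_nit (Vu Vv : {set T}) a w b : [disjoint Vu & Vv] -> Vu :|: Vv = setT ->
  induced_path e Vu -> induced_path e Vv ->
  P a < P w < P b -> e a w -> e w b -> e a b -> ~~((P a == 0) && (P b == n.-1)) ->
  (P a).+1 < P w -> (P w).+1 < P b -> False.
Proof.
move=> dis hU iU iV rng eaw ewb eab nr g1 g2.
have [x1 [r1 eax1 ex1w]] := earIn' eaw g1.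
have [x2 [r2 ewx2 ex2b]] := earIn' ewb g2.
have [z hz] : exists z, (P z < P a) || (P b < P z).
  case: (posnP (P a)) => h.
    have [z hz] := surj' nm1; exists z; move: nr; rewrite h hz; have := ltn_ord (p b); clear; lia.
  have [z hz] := surj' n0; exists z; clear -h hz; lia.
have [x3 [r3 eax3 ex3b]] := earOut' eab (ltac:(clear -rng; lia)) hz.
have b1 : btw (P a) (P b) (P w) != btw (P a) (P x1) (P w) by clear -rng r1; rewrite /btw; lia.
have b2 : btw (P w) (P a) (P b) != btw (P w) (P x2) (P b) by clear -rng r2; rewrite /btw; lia.
have b3 : btw (P a) (P w) (P b) != btw (P a) (P x3) (P b) by clear -rng r3; rewrite /btw; lia.
have key : forall X Y : {set T}, [disjoint X & Y] -> X :|: Y = setT ->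
    induced_path e X -> induced_path e Y ->
    [/\ a \in X -> w \in X -> b \in Y -> False,
        w \in X -> b \in X -> a \in Y -> False &
        a \in X -> b \in X -> w \in Y -> False].
  move=> X Y dXY hXY iX iY; split=> hh1 hh2 hh3.
  - exact: (sideG dXY hXY iX iY hh1 hh2 hh3 eaw eax1 ex1w b1).
  - exact: (sideG dXY hXY iX iY hh1 hh2 hh3 ewb ewx2 ex2b b2).
  - exact: (sideG dXY hXY iX iY hh1 hh2 hh3 eab eax3 ex3b b3).
have [k1 k2 k3] := key _ _ dis hU iU iV.
have dis' : [disjoint Vv & Vu] by rewrite disjoint_sym.
have hU' : Vv :|: Vu = setT by rewrite setUC.
have [k4 k5 k6] := key _ _ dis' hU' iV iU.
have mem' : forall v, v \notin Vu -> v \in Vv.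
  move=> v hv; have : v \in Vu :|: Vv by rewrite hU inE.
  by rewrite inE (negbTE hv).
case: (boolP (a \in Vu)) => ha; case: (boolP (w \in Vu)) => hw; case: (boolP (b \in Vu)) => hb.
- exact: (tri iU ha hw hb eaw ewb eab).
- exact: (k1 ha hw (mem' _ hb)).
- exact: (k3 ha hb (mem' _ hw)).
- exact: (k5 (mem' _ hw) (mem' _ hb) ha).
- exact: (k2 hw hb (mem' _ ha)).
- exact: (k6 (mem' _ ha) (mem' _ hb) hw).
- exact: (k4 (mem' _ ha) (mem' _ hw) hb).
- exact: (tri iV (mem' _ ha) (mem' _ hw) (mem' _ hb) eaw ewb eab).
Qed.
End C.


Definition contig (T : finType) (B : seq {set T}) := forall v i j k, i <= j -> j <= k -> k < size B ->
     v \in nth set0 B i -> v \in nth set0 B k -> v \in nth set0 B j.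

Definition bt i j k := (i <= j <= k) || (k <= j <= i).

Lemma contig_btw (T : finType) (B : seq {set T}) v i j k : contig B -> bt i j k -> i < size B -> k < size B ->
  v \in nth set0 B i -> v \in nth set0 B k -> v \in nth set0 B j.
Proof.
move=> C /orP [/andP [h1 h2] | /andP [h1 h2]] hi hk vi vk.
  exact: (C v i j k).
exact: (C v k j i).
Qed.

Lemma bag3 (T : finType) (c : {set T}) u1 u2 u3 t : #|c| <= 3 -> u1 \in c -> u2 \in c -> u3 \in c -> t \in c ->
  uniq [:: u1; u2; u3; t] -> False.
Proof.
move=> sz h1 h2 h3 h4 u.
have : #|[:: u1; u2; u3; t]| <= #|c|.
  apply: subset_leq_card; apply/subsetP => x; rewrite !inE.
  by case/or4P => /eqP ->.
by rewrite (card_uniqP u) /=; lia.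
Qed.

Section D.
Variables (T : finType) (e : rel T).
Variable B : seq {set T}.
Hypothesis PD : path_decomposition e B.

Lemma cov_idx x y : e x y -> exists2 i, i < size B & (x \in nth set0 B i) && (y \in nth set0 B i).
Proof.
case: PD => cov _ /cov [b hb hxy].
by exists (index b B); rewrite ?index_mem // nth_index.
Qed.

Lemma helly x y z : e x y -> e y z -> e x z -> exists2 i, i < size B &
  [&& x \in nth set0 B i, y \in nth set0 B i & z \in nth set0 B i].
Proof.
have C : contig B by case: PD.
move=> /cov_idx [i1 s1 /andP [x1 y1]] /cov_idx [i2 s2 /andP [y2 z2]] /cov_idx [i3 s3 /andP [x3 z3]].
have : [|| bt i1 i2 i3, bt i2 i1 i3 | bt i1 i3 i2] by rewrite /bt; clear; lia.
case/or3P => h.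
- exists i2 => //; rewrite y2 z2 !andbT; exact: (contig_btw C h s1 s3 x1 x3).
- exists i1 => //; rewrite x1 y1 /=; exact: (contig_btw C h s2 s3 z2 z3).
- exists i3 => //; rewrite x3 z3 !andbT /=; exact: (contig_btw C h s1 s2 y1 y2).
Qed.

Lemma sun a w b x y z : (forall c, c \in B -> #|c| <= 3) ->
  e a w -> e w b -> e a b -> e a x -> e x w -> e w y -> e y b -> e a z -> e z b ->
  uniq [:: a; w; b; x; y; z] -> False.
Proof.
move=> sz eaw ewb eab eax exw ewy eyb eaz ezb u.
have C : contig B by case: PD.
have szn : forall i, i < size B -> #|nth set0 B i| <= 3 by move=> i hi; apply: sz; apply: mem_nth.
have [t0 s0 /and3P [a0 w0 b0]] := helly eaw ewb eab.
have [t1 s1 /and3P [a1 x1 w1]] := helly eax exw eaw.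
have [t2 s2 /and3P [w2 y2 b2]] := helly ewy eyb ewb.
have [t3 s3 /and3P [a3 z3 b3]] := helly eaz ezb eab.
move: u; rewrite /= !inE !negb_or => /and5P [/and5P [aw ab ax ay az] /and4P [wb wx wy wz] /and3P [bx byy bz] /andP [xy xz] /andP [yz _]].
have F := fun j u1 u2 u3 t (hj : j < size B) => @bag3 T (nth set0 B j) u1 u2 u3 t (szn j hj).
have d1 : t0 != t1.
  apply/eqP => h; subst t1; apply: (F t0 a w b x s0 a0 w0 b0 x1); rewrite /= !inE; 
  by rewrite !negb_or aw ab ax wb wx bx.
have d2 : t0 != t2.
  apply/eqP => h; subst t2; apply: (F t0 a w b y s0 a0 w0 b0 y2); rewrite /= !inE; 
  by rewrite !negb_or aw ab ay wb wy byy.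
have d3 : t0 != t3.
  apply/eqP => h; subst t3; apply: (F t0 a w b z s0 a0 w0 b0 z3); rewrite /= !inE; 
  by rewrite !negb_or aw ab az wb wz bz.
have : [|| bt t0 t1 t2 || bt t0 t1 t3, bt t0 t2 t1 || bt t0 t2 t3 | bt t0 t3 t1 || bt t0 t3 t2].
  by move: d1 d2 d3; rewrite /bt; clear; lia.
case/or3P => /orP h.
- have bb : b \in nth set0 B t1.
    by case: h => h; [exact: (contig_btw C h s0 s2 b0 b2) | exact: (contig_btw C h s0 s3 b0 b3)].
  apply: (F t1 a w x b s1 a1 w1 x1 bb); rewrite /= !inE.
  by rewrite !negb_or aw ax ab wx wb (eq_sym x b) bx.
- have aa : a \in nth set0 B t2.
    by case: h => h; [exact: (contig_btw C h s0 s1 a0 a1) | exact: (contig_btw C h s0 s3 a0 a3)].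
  apply: (F t2 w b y a s2 w2 b2 y2 aa); rewrite /= !inE.
  by rewrite !negb_or wb wy (eq_sym w a) aw byy (eq_sym b a) ab (eq_sym y a) ay.
- have ww : w \in nth set0 B t3.
    by case: h => h; [exact: (contig_btw C h s0 s1 w0 w1) | exact: (contig_btw C h s0 s2 w0 w2)].
  apply: (F t3 a b z w s3 a3 b3 z3 ww); rewrite /= !inE.
  by rewrite !negb_or ab az aw bz (eq_sym b w) wb (eq_sym z w) wz.
Qed.
End D.


Ltac genlia := repeat match goal with
 | H : context [nat_of_ord _] |- _ => revert H
 end; repeat match goal with |- context [nat_of_ord ?t] => let x := fresh "x" in generalize (nat_of_ord t) => x end; lia.

Lemma contig_cons (T : finType) (b : {set T}) B : contig B ->
  (forall v i, i < size B -> v \in b -> v \in nth set0 B i -> v \in nth set0 B 0) -> contig (b :: B).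
Proof.
move=> C H v [|i] [|j] [|k] //= hij hjk hk.
- move=> vb vk; apply: (C v 0 j k) => //; exact: (H v k).
- by move=> vi vk; apply: (C v i j k).
Qed.

Lemma card3 (T : finType) (a b c : T) : #|[set a; b; c]| <= 3.
Proof.
have : [set a; b; c] \subset [:: a; b; c] by apply/subsetP => x; rewrite !inE -orbA.
move/subset_leq_card/leq_trans; apply; exact: card_size.
Qed.

Section E.
Variables (T : finType) (e : rel T).
Hypotheses (esym : symmetric e) (eirr : irreflexive e).
Hypothesis n3 : 3 <= #|T|.
Variable p : T -> 'I_#|T|.
Hypothesis V : valid e p.
Local Notation n := #|T|.
Local Notation P x := (nat_of_ord (p x)).
Let crossE' := crossE esym eirr n3 V.
Let neqP' := neqP esym eirr n3 V.
Let surj' := surj esym eirr n3 V.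
Let Pinj' := Pinj esym eirr n3 V.
Let hull' := hull esym eirr n3 V.
Let NCn' := NCn esym eirr n3 V.
Let earIn' := earIn esym eirr n3 V.
Let earOut' := earOut esym eirr n3 V.
Let Plt x : P x < n := ltn_ord (p x).

Lemma pw_nit : pathwidth_le e 2 -> forall a w b, P a < P w < P b -> e a w -> e w b -> e a b ->
  ~~((P a == 0) && (P b == n.-1)) -> (P a).+1 < P w -> (P w).+1 < P b -> False.
Proof.
move=> [B [PD sz]] a w b rng eaw ewb eab nr g1 g2.
have [x1 [r1 eax1 ex1w]] := earIn' eaw g1.
have [x2 [r2 ewx2 ex2b]] := earIn' ewb g2.
have [z hz] : exists z, (P z < P a) || (P b < P z).
  case: (posnP (P a)) => h.
    have [z hz] := surj' (nm1 esym eirr n3 V); exists z; move: nr; rewrite h hz; have := ltn_ord (p b); clear; lia.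
  have [z hz] := surj' (n0 esym eirr n3 V); exists z; clear -h hz; lia.
have [x3 [r3 eax3 ex3b]] := earOut' eab (ltac:(clear -rng; lia)) hz.
apply: (sun PD sz eaw ewb eab eax1 ex1w ewx2 ex2b eax3 ex3b).
rewrite /= !inE !negb_or !neqP'; clear -rng r1 r2 r3; lia.
Qed.

Hypothesis NIT : forall a w b, P a < P w < P b -> e a w -> e w b -> e a b ->
  ~~((P a == 0) && (P b == n.-1)) -> (P w == (P a).+1) || ((P w).+1 == P b).

Lemma reg d : forall a b, P b - P a = d.+1 -> e a b -> ~~((P a == 0) && (P b == n.-1)) ->
  exists m, exists B : seq {set T}, [/\ P a <= m < P b,
  (forall x y, e x y -> P a <= P x -> P x < P y -> P y <= P b -> (P x <= m < P y) || (P y == (P x).+1)),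
  (forall x y, e x y -> P a <= P x -> P x < P y -> P y <= P b -> exists2 c, c \in B & (x \in c) && (y \in c)),
  (forall c x, c \in B -> x \in c -> P a <= P x <= P b) &
  [/\ contig B, a \in nth set0 B 0, b \in nth set0 B 0, 0 < size B & forall c, c \in B -> #|c| <= 3]].
Proof.
elim: d => [|d IH] a b hd eab nr.
  exists (P a), [:: [set a; b]]; split.
  - by clear -hd; lia.
  - by move=> x y _ h1 h2 h3; clear -hd h1 h2 h3; lia.
  - move=> x y _ h1 h2 h3; exists [set a; b]; first by rewrite inE.
    have -> : x = a by apply: Pinj'; clear -hd h1 h2 h3; lia.
    have -> : y = b by apply: Pinj'; clear -hd h1 h2 h3; lia.
    by rewrite !inE !eqxx orbT.
  - move=> c x; rewrite inE => /eqP -> /set2P [] ->; clear -hd; lia.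
  split => //.
  - move=> v [|i] [|j] [|k] //=; lia.
  - by rewrite /= !inE eqxx.
  - by rewrite /= !inE eqxx orbT.
  - by move=> c; rewrite inE => /eqP ->; rewrite cards2; case: (_ != _).
have gap : (P a).+1 < P b by clear -hd; lia.
have [w [rw eaw ewb]] := earIn' eab gap.
have := NIT rw eaw ewb eab nr.
case: (boolP (P w == (P a).+1)) => hA hB.
  have hd' : P b - P w = d.+1 by clear -hd hA; lia.
  have nr' : ~~((P w == 0) && (P b == n.-1)) by clear -hA; lia.
  have [m [B [i1 i2 i3 i4 [i5 i6 i7 i8 i9]]]] := IH w b hd' ewb nr'.
  exists m, ([set a; w; b] :: B); split.
  - by clear -i1 hA; lia.
  - move=> x y exy h1 h2 h3.
    case: (ltnP (P x) (P w)) => hxw; last by apply: i2.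
    have xa : x = a by apply: Pinj'; clear -hA h1 hxw; lia.
    subst x.
    case: (P y =P P w) => hyw; first by clear -hyw hA; lia.
    case: (P y =P P b) => hyb; first by clear -hyb i1 hA; lia.
    have := NCn' ewb exy; rewrite /btw; clear -hA h2 h3 hyw hyb rw; lia.
  - move=> x y exy h1 h2 h3.
    case: (ltnP (P x) (P w)) => hxw.
      have xa : x = a by apply: Pinj'; clear -hA h1 hxw; lia.
      subst x; exists [set a; w; b]; first by rewrite mem_head.
      case: (P y =P P w) => hyw; first by rewrite (Pinj' hyw) !inE !eqxx /= !orbT.
      case: (P y =P P b) => hyb; first by rewrite (Pinj' hyb) !inE !eqxx /= !orbT.
      have := NCn' ewb exy; rewrite /btw; clear -hA h2 h3 hyw hyb rw; lia.
    have [c hc hxy] := i3 x y exy hxw h2 h3.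
    by exists c => //; rewrite inE hc orbT.
  - move=> c x; rewrite inE => /orP [/eqP -> | hc].
      by rewrite !inE -orbA => /or3P [] /eqP ->; clear -rw i1; lia.
    by move=> /(i4 c x hc); clear -rw; lia.
  split => //.
  - apply: contig_cons => // v i hi; rewrite !inE -orbA => /or3P [] /eqP -> hv //.
    have := i4 _ _ (mem_nth set0 hi) hv; clear -rw; lia.
  - by rewrite /= !inE eqxx.
  - by rewrite /= !inE eqxx !orbT.
  - move=> c; rewrite inE => /orP [/eqP -> | hc]; [exact: card3 | exact: i9].
have hd' : P w - P a = d.+1 by clear -hd hB; lia.
have nr' : ~~((P a == 0) && (P w == n.-1)) by have := Plt b; clear -hB; lia.
have [m [B [i1 i2 i3 i4 [i5 i6 i7 i8 i9]]]] := IH a w hd' eaw nr'.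
exists m, ([set a; w; b] :: B); split.
- by clear -i1 hB; lia.
- move=> x y exy h1 h2 h3.
  case: (leqP (P y) (P w)) => hyw; first by apply: i2.
  have yb : y = b by apply: Pinj'; clear -hB h3 hyw; lia.
  subst y.
  case: (P x =P P w) => hxw; first by clear -hxw hB; lia.
  case: (P x =P P a) => hxa; first by clear -hxa i1 hB; lia.
  have := NCn' eaw exy; rewrite /btw; clear -hB h1 h2 hxw hxa rw; lia.
- move=> x y exy h1 h2 h3.
  case: (leqP (P y) (P w)) => hyw.
    have [c hc hxy] := i3 x y exy h1 h2 hyw.
    by exists c => //; rewrite inE hc orbT.
  have yb : y = b by apply: Pinj'; clear -hB h3 hyw; lia.
  subst y; exists [set a; w; b]; first by rewrite mem_head.
  case: (P x =P P w) => hxw; first by rewrite (Pinj' hxw) !inE !eqxx /= !orbT.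
  case: (P x =P P a) => hxa; first by rewrite (Pinj' hxa) !inE !eqxx /= !orbT.
  have := NCn' eaw exy; rewrite /btw; clear -hB h1 h2 hxw hxa rw; lia.
- move=> c x; rewrite inE => /orP [/eqP -> | hc].
    by rewrite !inE -orbA => /or3P [] /eqP ->; clear -rw i1; lia.
  by move=> /(i4 c x hc); clear -rw; lia.
split => //.
- apply: contig_cons => // v i hi; rewrite !inE -orbA => /or3P [] /eqP -> hv //.
  have := i4 _ _ (mem_nth set0 hi) hv; clear -rw; lia.
- by rewrite /= !inE eqxx.
- by rewrite /= !inE eqxx !orbT.
- move=> c; rewrite inE => /orP [/eqP -> | hc]; [exact: card3 | exact: i9].
Qed.
End E.


Lemma contig_rev (T : finType) (B : seq {set T}) : contig B -> contig (rev B).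
Proof.
move=> C v i j k hij hjk; rewrite size_rev => hk.
have hi : i < size B by lia.
have hj : j < size B by lia.
rewrite !nth_rev // => vi vk.
apply: (C v (size B - k.+1) (size B - j.+1) (size B - i.+1)) => //; lia.
Qed.

Lemma contig_cat (T : finType) (A B : seq {set T}) : contig A -> contig B ->
  (forall v i j, i < size A -> j < size B -> v \in nth set0 A i -> v \in nth set0 B j ->
     (v \in nth set0 A (size A).-1) /\ (v \in nth set0 B 0)) -> contig (A ++ B).
Proof.
move=> CA CB H v i j k hij hjk; rewrite size_cat => hk; rewrite !nth_cat.
case: (ltnP k (size A)) => hkA.
  have hiA : i < size A by lia.
  have hjA : j < size A by lia.
  rewrite hiA hjA; exact: CA.
case: (ltnP i (size A)) => hiA vi vk.
  have [l0 r0] := H v i (k - size A) hiA (ltac:(lia)) vi vk.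
  case: ifP => hjA.
    apply: (CA v i j (size A).-1) => //; lia.
  apply: (CB v 0 (j - size A) (k - size A)) => //; lia.
have -> : (j < size A) = false by lia.
apply: (CB v (i - size A) (j - size A) (k - size A)) => //; lia.
Qed.

Section F.
Variables (T : finType) (e : rel T).
Hypotheses (esym : symmetric e) (eirr : irreflexive e).
Hypothesis n3 : 3 <= #|T|.
Variable p : T -> 'I_#|T|.
Hypothesis V : valid e p.
Local Notation n := #|T|.
Local Notation P x := (nat_of_ord (p x)).
Let surj' := surj esym eirr n3 V.
Let Pinj' := Pinj esym eirr n3 V.
Let hull' := hull esym eirr n3 V.
Let NCn' := NCn esym eirr n3 V.
Let earIn' := earIn esym eirr n3 V.
Let Plt x : P x < n := ltn_ord (p x).
Hypothesis NIT : forall a w b, P a < P w < P b -> e a w -> e w b -> e a b ->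
  ~~((P a == 0) && (P b == n.-1)) -> (P w == (P a).+1) || ((P w).+1 == P b).
Let reg' := reg esym eirr n3 V NIT.

Lemma ordE m i (h : i < m) : nat_of_ord (Ordinal h) = i. Proof. by []. Qed.

Definition Q (x0 : T) j := odflt x0 [pick x | P x == j].

Lemma PQ x0 j : j < n -> P (Q x0 j) = j.
Proof.
move=> hj; rewrite /Q; case: pickP => [x /eqP //| H].
have [x hx] := surj' hj; by have := H x; rewrite hx eqxx.
Qed.

Lemma IP x0 (f : nat -> nat) len (S : {set T}) : 0 < len -> (forall i, i < len -> f i < n) ->
  (forall i j, i < len -> j < len -> f i = f j -> i = j) ->
  (forall x, (x \in S) = [exists i : 'I_len, P x == f i]) ->
  (forall i j, i < len -> j < len -> e (Q x0 (f i)) (Q x0 (f j)) = (i.+1 == j) || (j.+1 == i)) ->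
  induced_path e S.
Proof.
move=> l0 fn finj hS hadj.
exists [seq Q x0 (f i) | i <- iota 0 len]; split.
- by rewrite -size_eq0 size_map size_iota -lt0n.
- rewrite map_inj_in_uniq ?iota_uniq // => i j; rewrite !mem_iota !add0n => /andP [_ hi] /andP [_ hj] h.
  apply: finj => //; rewrite -(PQ x0 (fn i hi)) -(PQ x0 (fn j hj)); by rewrite h.
- apply/setP => x; rewrite inE hS; apply/existsP/mapP.
    case=> i /eqP hx; exists (nat_of_ord i); first by rewrite mem_iota add0n ltn_ord.
    by apply: Pinj'; rewrite PQ // fn.
  case=> i; rewrite mem_iota add0n => /andP [_ hi] ->.
  by exists (Ordinal hi); rewrite PQ ?fn.
- move=> y0 i j; rewrite size_map size_iota => hi hj.
  rewrite !(nth_map 0) ?size_iota // !nth_iota // !add0n; exact: hadj.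
Qed.

Theorem main3 : pathwidth_le e 2 /\ exists Vu Vv : {set T},
  [/\ [disjoint Vu & Vv], Vu :|: Vv = setT, induced_path e Vu & induced_path e Vv].
Proof.
have [r0 h0] := surj' (n0 esym eirr n3 V).
have [r1 h1] := surj' (nm1 esym eirr n3 V).
have e01 : e r0 r1 by apply: hull'; rewrite h0 h1 !eqxx orbT.
have gap : (P r0).+1 < P r1 by rewrite h0 h1; clear -n3; lia.
have [w0 [rw e0w ew1]] := earIn' e01 gap.
have hd1 : P w0 - P r0 = (P w0).-1.+1 by rewrite h0; clear -rw h0; lia.
have nr1 : ~~((P r0 == 0) && (P w0 == n.-1)) by clear -rw h1; lia.
have hd2 : P r1 - P w0 = (P r1 - P w0).-1.+1 by clear -rw; lia.
have nr2 : ~~((P w0 == 0) && (P r1 == n.-1)) by clear -rw h0; lia.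
have [m1 [B1 [a1 a2 a3 a4 [a5 a6 a7 a8 a9]]]] := reg' hd1 e0w nr1.
have [m2 [B2 [b1 b2 b3 b4 [b5 b6 b7 b8 b9]]]] := reg' hd2 ew1 nr2.
have cls : forall x y, e x y -> P x < P y -> [|| P y <= P w0, P w0 <= P x | (P x == 0) && (P y == n.-1)].
  move=> x y exy lt.
  case: (leqP (P y) (P w0)) => hy //; case: (leqP (P w0) (P x)) => hx; first by rewrite orbT.
  have := Plt y; case: (posnP (P x)) => hx0 ly.
    have := NCn' ew1 exy; rewrite /btw; clear -h0 h1 rw hx0 hx hy lt ly; lia.
  have := NCn' e0w exy; rewrite /btw; clear -h0 h1 rw hx0 hx hy lt ly; lia.
split.
  exists (rev B1 ++ ([set r0; w0; r1] :: B2)); split; last first.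
    move=> c; rewrite mem_cat mem_rev inE => /or3P [hc | /eqP -> | hc].
    - exact: a9.
    - exact: card3.
    - exact: b9.
  split.
    have cov : forall x y, e x y -> P x < P y -> exists2 b, b \in rev B1 ++ ([set r0; w0; r1] :: B2) & (x \in b) && (y \in b).
      move=> x y exy lt; case/or3P: (cls x y exy lt) => h.
      - have [c hc hxy] := a3 x y exy (ltac:(by rewrite h0)) lt h.
        by exists c => //; rewrite mem_cat mem_rev hc.
      - have [c hc hxy] := b3 x y exy h lt (ltac:(rewrite h1; have := Plt y; clear; lia)).
        by exists c => //; rewrite mem_cat inE hc !orbT.
      - exists [set r0; w0; r1]; first by rewrite mem_cat inE eqxx orbT.
        have -> : x = r0 by apply: Pinj'; clear -h h0; lia.
        have -> : y = r1 by apply: Pinj'; clear -h h1; lia.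
        by rewrite !inE !eqxx !orbT.
    move=> x y exy.
    case: (ltngtP (P x) (P y)) => lt.
    - exact: cov.
    - have [c hc] := cov y x (ltac:(by rewrite esym)) lt; rewrite andbC => hxy; by exists c.
    - by move: exy; rewrite (Pinj' lt) eirr.
  apply: contig_cat.
  - exact: contig_rev.
  - apply: contig_cons => // v i hi; rewrite !inE -orbA => /or3P [] /eqP -> hv //.
    have := b4 _ _ (mem_nth set0 hi) hv; clear -rw h0; lia.
  move=> v i j; rewrite size_rev => hi hj; rewrite nth_rev // => vi vj.
  have pv := a4 _ _ (mem_nth set0 (ltac:(clear -hi; lia) : size B1 - i.+1 < size B1)) vi.
  have vr : (v == r0) || (v == w0).
    move: vj; case: j hj => [|j] hj vj.
      move: vj; change (v \in [set r0; w0; r1] -> (v == r0) || (v == w0)).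
      rewrite !inE -orbA => /or3P [] /eqP hv; rewrite hv ?eqxx ?orbT //.
      move: pv; rewrite hv h1; clear -rw h1; lia.
    have vj2 : v \in nth set0 B2 j := vj.
    have := b4 _ _ (mem_nth set0 (hj : j < size B2)) vj2 => pv2.
    have -> : v = w0 by apply: Pinj'; clear -pv pv2; lia.
    by rewrite eqxx orbT.
  rewrite nth_rev; last by rewrite prednK.
  rewrite prednK // subnn.
  by case/orP: vr => /eqP ->; rewrite ?a6 ?a7 /= !inE !eqxx ?orbT.
have PQ' := PQ r0.
have ch : forall a b, a < n -> b < n -> e (Q r0 a) (Q r0 b) ->
   [|| (a <= m1 < b) && (b <= P w0), (P w0 <= a <= m2) && (m2 < b), b == a.+1, (a == 0) && (b == n.-1),
       (b <= m1 < a) && (a <= P w0), (P w0 <= b <= m2) && (m2 < a), a == b.+1 | (b == 0) && (a == n.-1)].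
  have ch1 : forall a b, a < n -> b < n -> e (Q r0 a) (Q r0 b) -> a < b ->
      [|| (a <= m1 < b) && (b <= P w0), (P w0 <= a <= m2) && (m2 < b), b == a.+1 | (a == 0) && (b == n.-1)].
    move=> a b ha hb eab lt.
    have := cls _ _ eab; rewrite !PQ' // => /(_ lt) /or3P [] hc.
    - have := a2 _ _ eab; rewrite !PQ' // h0 => /(_ (leq0n _) lt hc) hh.
      by clear -hh hc a1; lia.
    - have := b2 _ _ eab; rewrite !PQ' // h1 => /(_ hc lt (ltac:(clear -hb; lia))) hh.
      by clear -hh hc b1; lia.
    - by clear -hc; lia.
  move=> a b ha hb eab; case: (ltngtP a b) => lt.
  - by have := ch1 a b ha hb eab lt; clear; lia.
  - by have := ch1 b a hb ha (ltac:(by rewrite esym)) lt; clear; lia.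
  - by move: eab; rewrite lt eirr.
have hl : forall a b, a < n -> b < n ->
    [|| b == a.+1, a == b.+1, (a == 0) && (b == n.-1) | (b == 0) && (a == n.-1)] -> e (Q r0 a) (Q r0 b).
  move=> a b ha hb /or4P [] h.
  - by apply: hull'; rewrite !PQ' // h.
  - by rewrite esym; apply: hull'; rewrite !PQ' // h.
  - by apply: hull'; rewrite !PQ' // h orbT.
  - by rewrite esym; apply: hull'; rewrite !PQ' // h orbT.
set Vu := [set x | m1 < P x <= m2].
have lr1 := Plt r1.
exists Vu, (~: Vu); split.
- by rewrite disjoints_subset setCK subxx.
- exact: setUCr.
- apply: (@IP r0 (fun i => m1.+1 + i) (m2 - m1)).
  + by clear -a1 b1; lia.
  + by move=> i hi; cbv beta; clear -hi b1 h1 lr1; lia.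
  + by move=> i j hi hj; cbv beta; clear; lia.
  + move=> x; rewrite inE; apply/idP/existsP.
      move=> hx; have hi : P x - m1.+1 < m2 - m1 by clear -hx; lia.
      by exists (Ordinal hi); rewrite ordE; cbv beta; apply/eqP; clear -hx; lia.
    by case=> i /eqP ->; have := ltn_ord i; clear; lia.
  + move=> i j hi hj; cbv beta.
    have ha : m1.+1 + i < n by clear -hi b1 h1 lr1; lia.
    have hb : m1.+1 + j < n by clear -hj b1 h1 lr1; lia.
    apply/idP/idP => [/(ch _ _ ha hb) hh | hh].
      by clear -hh hi hj a1 b1 h1 lr1; lia.
    by apply: hl => //; clear -hh hi hj a1 b1 h1 lr1; lia.
-   apply: (@IP r0 (fun i => if i < (n.-1 - m2) then m2.+1 + i else i - (n.-1 - m2)) ((n.-1 - m2) + m1.+1)).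
  + by clear; lia.
  + by move=> i hi; cbv beta; case: ifP; clear -hi a1 b1 h1 lr1 rw; lia.
  + by move=> i j hi hj; cbv beta; case: ifP; case: ifP; clear -hi hj a1 b1 h1 lr1 rw; lia.
  + move=> x; rewrite !inE; apply/idP/existsP.
      move=> hx; have lx := Plt x.
      case: (ltnP m2 (P x)) => hx2.
        have hi : P x - m2.+1 < (n.-1 - m2) + m1.+1 by clear -hx2 lx; lia.
        exists (Ordinal hi); rewrite ordE; cbv beta.
        by case: ifP => hc; apply/eqP; clear -hc hx hx2 lx; lia.
      have hi : P x + (n.-1 - m2) < (n.-1 - m2) + m1.+1 by clear -hx hx2 lx; lia.
      exists (Ordinal hi); rewrite ordE; cbv beta.
      by case: ifP => hc; apply/eqP; clear -hc hx hx2 lx; lia.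
    case=> i; have := ltn_ord i; cbv beta; case: ifP => hc hi /eqP ->; clear -hc hi a1 b1 h1 lr1 rw; lia.
  + move=> i j hi hj; cbv beta.
    set a := (if i < (n.-1 - m2) then _ else _); set b := (if j < (n.-1 - m2) then _ else _).
    have ha : a < n by rewrite /a; case: ifP; clear -hi a1 b1 h1 lr1 rw; lia.
    have hb : b < n by rewrite /b; case: ifP; clear -hj a1 b1 h1 lr1 rw; lia.
    apply/idP/idP => [/(ch _ _ ha hb) hh | hh].
      by move: hh; rewrite /a /b; case: ifP; case: ifP; clear -hi hj a1 b1 h1 lr1 rw; lia.
    apply: hl => //; move: hh; rewrite /a /b; case: ifP; case: ifP; clear -hi hj a1 b1 h1 lr1 rw; lia.
Qed.
End F.


Theorem propositionp (n : nat) (T : finType) (e : rel T)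
  (e_sym : symmetric e) (e_irr : irreflexive e) (hn : #|T| = n) (hn3 : 3 <= n) :
  (outerplanar_triangulation e /\ pathwidth_le e 2) <-> PW2 n e.
Proof.
have n3 : 3 <= #|T| by rewrite hn.
split.
- case=> [[p V] pw].
  have NIT : forall a w b, nat_of_ord (p a) < p w < p b -> e a w -> e w b -> e a b ->
      ~~((nat_of_ord (p a) == 0) && (nat_of_ord (p b) == #|T|.-1)) ->
      (nat_of_ord (p w) == (nat_of_ord (p a)).+1) || ((nat_of_ord (p w)).+1 == p b).
    move=> a w b rng eaw ewb eab nr; apply/negPn/negP => hh.
    apply: (pw_nit e_sym e_irr n3 V pw rng eaw ewb eab nr); clear -hh rng; lia.
  split => //; split; first by exists p.
  exact: (main3 e_sym e_irr n3 V NIT).2.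
- case=> _ [[p V] [Vu [Vv [dis hU iU iV]]]].
  split; first by exists p.
  have NIT : forall a w b, nat_of_ord (p a) < p w < p b -> e a w -> e w b -> e a b ->
      ~~((nat_of_ord (p a) == 0) && (nat_of_ord (p b) == #|T|.-1)) ->
      (nat_of_ord (p w) == (nat_of_ord (p a)).+1) || ((nat_of_ord (p w)).+1 == p b).
    move=> a w b rng eaw ewb eab nr; apply/negPn/negP => hh.
    apply: (pw2_nit e_sym e_irr n3 V dis hU iU iV rng eaw ewb eab nr); clear -hh rng; lia.
  exact: (main3 e_sym e_irr n3 V NIT).1.
Qed.
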